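(* Let $V$ be a finite set, $C$ a partition of $V$, $k>0$, $G=(V,E)$ the clique graph of $C$ with edge weight $k$, and let $M\ge 0$ and $\beta>0$. Let $d$ be a cluster in some clustering of $G$ (so $d$ is a nonempty subset of $V$), and put $q(d)=\frac{w_d}{M+v_d/\beta}-\left(\frac{v_d}{M+v_d/\beta}\right)^2$. Then $$\frac{w_d}{v_d}-\beta-\frac{\beta M}{k}\;\le\;\frac{q(d)}{\beta}\;\le\;\frac{w_d}{v_d}-\beta+\frac{2\beta^2M}{k}.$$
   Context: The clique graph of a partition $C$ of $V$ with edge weight $k$ is $G=(V,E)$ with $E(i,j)=k$ if $i$ and $j$ lie in the same block of $C$ (including $i=j$) and $E(i,j)=0$ otherwise. For $d\subseteq V$: $v_d=\sum_{i\in d}\sum_{j\in V}E(i,j)$ and $w_d=\sum_{i,j\in d}E(i,j)$. The quantity $q(d)$ is the contribution of $d$ to the adaptive scale modularity with parameters $M$ and $\gamma=1/\beta$. *)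

(* Defs.v *)
From mathcomp Require Import all_boot all_order all_algebra.
Set Implicit Arguments. Unset Strict Implicit. Unset Printing Implicit Defensive.
Import Order.TTheory GRing.Theory Num.Theory.
Local Open Scope ring_scope.

Definition cliqueE (R : realFieldType) (V : finType) (C : {set {set V}}) (k : R)
  (i j : V) : R :=
  if [exists B in C, (i \in B) && (j \in B)] then k else 0.

Definition vol (R : realFieldType) (V : finType) (E : V -> V -> R) (d : {set V}) : R :=
  \sum_(i in d) \sum_(j : V) E i j.

Definition wt (R : realFieldType) (V : finType) (E : V -> V -> R) (d : {set V}) : R :=
  \sum_(i in d) \sum_(j in d) E i j.

(* contribution of d to the adaptive scale modularity, gamma = 1/beta *)
Definition qasm (R : realFieldType) (V : finType) (E : V -> V -> R)
  (M beta : R) (d : {set V}) : R :=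
  wt E d / (M + vol E d / beta) - (vol E d / (M + vol E d / beta)) ^+ 2.

(* Main.v *)
Require Import Defs.
From mathcomp Require Import all_boot all_order all_algebra.
From mathcomp Require Import ring lra.
Import Order.TTheory GRing.Theory Num.Theory.
Local Open Scope ring_scope.

Lemma alg (R : realFieldType) (w v m b k : R) : 0 <= w -> w <= v -> 0 <= m -> 0 < b -> 0 < k -> k <= v ->
  w / v - b - m / k <= w/(v+m) - b * v^+2/(v+m)^+2 /\
  w/(v+m) - b * v^+2/(v+m)^+2 <= w / v - b + 2 * b * m / k.
Proof.
move=> w0 wv m0 b0 k0 kv.
have v0 : 0 < v by apply: lt_le_trans kv.
have vm0 : 0 < v + m by lra.
have hmk : m/(v+m) <= m/k.
  apply: ler_wpM2l => //; rewrite lef_pV2 ?posrE //; lra.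
have h1 : w/v - w/(v+m) <= m/k.
  have -> : w/v - w/(v+m) = (w/v) * (m/(v+m)) by field; lra.
  have hwv : w/v <= 1 by rewrite ler_pdivrMr // mul1r.
  apply: le_trans (_ : 1 * (m/(v+m)) <= _); last by rewrite mul1r.
  apply: ler_wpM2r => //; apply: divr_ge0 => //; lra.
have h2 : v^+2/(v+m)^+2 <= 1.
  rewrite ler_pdivrMr ?exprn_gt0 // mul1r ler_pXn2r // ?nnegrE; lra.
have h3 : 1 - v^+2/(v+m)^+2 <= 2 * m / k.
  have -> : 1 - v^+2/(v+m)^+2 = m * (2*v+m) / (v+m)^+2 by field; lra.
  have le : m * (2*v+m) / (v+m)^+2 <= 2 * (m/(v+m)).
    have -> : 2 * (m/(v+m)) = m * (2*(v+m)) / (v+m)^+2 by field; lra.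
    apply: ler_wpM2r; first by rewrite invr_ge0 exprn_ge0 //; lra.
    apply: ler_wpM2l => //; lra.
  apply: le_trans le _; rewrite -mulrA; apply: ler_wpM2l => //; lra.
have h4 : w/(v+m) <= w/v.
  apply: ler_wpM2l => //; rewrite lef_pV2 ?posrE //; lra.
split.
  have : b * (v^+2/(v+m)^+2) <= b by rewrite -{2}(mulr1 b); apply: ler_wpM2l => //; lra.
  rewrite !mulrA; lra.
have : b * (1 - v^+2/(v+m)^+2) <= b * (2 * m / k) by apply: ler_wpM2l => //; lra.
rewrite mulrBr mulr1 !mulrA; lra.
Qed.

Theorem lemma3 (R : realFieldType) (V : finType) (C : {set {set V}}) (k M beta : R)
  (d : {set V}) :
  partition C [set: V] -> 0 < k -> 0 <= M -> 0 < beta -> d != set0 ->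
  let E := cliqueE C k in
  wt E d / vol E d - beta - beta * M / k <= qasm E M beta d / beta /\
  qasm E M beta d / beta <= wt E d / vol E d - beta + 2 * beta ^+ 2 * M / k.
Proof.
move=> /and3P [/eqP cov _ _] k0 M0 b0 dn E.
have E0 i j : 0 <= E i j by rewrite /E /cliqueE; case: ifP => _; lra.
have Eii i : E i i = k.
  rewrite /E /cliqueE ifT //.
  have : i \in cover C by rewrite cov inE.
  by case/bigcupP => B BC iB; apply/existsP; exists B; rewrite BC iB.
set w := wt E d; set v := vol E d.
have w0 : 0 <= w by apply: sumr_ge0 => i _; apply: sumr_ge0.
have wv : w <= v.
  apply: ler_sum => i _; rewrite [X in _ <= X](bigID (fun j => j \in d)) /=.
  by rewrite lerDl; apply: sumr_ge0.
have kv : k <= v.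
  case/set0Pn: dn => x xd.
  rewrite /v /vol (bigD1 x) //= (bigD1 x) //= Eii -addrA lerDl.
  by apply: addr_ge0; apply: sumr_ge0 => *; [apply: E0 | apply: sumr_ge0].
have v0 : 0 < v by lra.
have -> : qasm E M beta d / beta = w/(v + beta * M) - beta * v^+2/(v + beta * M)^+2.
  rewrite /qasm -/w -/v; field.
  have : 0 < v + beta * M by have := mulr_ge0 (ltW b0) M0; lra.
  by move=> H; rewrite (gt_eqF H) (gt_eqF b0).
have [h1 h2] := @alg R w v (beta * M) beta k w0 wv (mulr_ge0 (ltW b0) M0) b0 k0 kv.
split; first by [].
have -> : 2 * beta ^+ 2 * M / k = 2 * beta * (beta * M) / k by ring.
by [].
Qed.
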